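(* For a nonnegative integer $q$ let $\wp(q)=\int_0^{\frac{\pi}{2}}z\sin^qz\,\mathrm{d}z$. Then for every nonnegative integer $n$, $$\wp(2n)=\frac{\binom{2n}{n}}{4^{n+1}}\left(\frac{\pi^2}{2}+\sum_{k=1}^n\frac{4^k}{k^2\binom{2k}{k}}\right),\qquad \wp(2n+1)=\frac{4^n}{(2n+1)\binom{2n}{n}}\left(1+\sum_{k=1}^n\frac{\binom{2k}{k}}{4^k(2k+1)}\right).$$ *)

(* Defs.v *)
From Stdlib Require Import Reals.
From Coquelicot Require Import Coquelicot.
Open Scope R_scope.

Definition wp (q : nat) : R := RInt (fun z => z * (sin z) ^ q) 0 (PI / 2).

Definition cbin (k : nat) : R := Binomial.C (2 * k) k.

(* Main.v *)
Require Import Defs.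
From Stdlib Require Import Reals Lra Lia.
From Coquelicot Require Import Coquelicot.
Open Scope R_scope.

Definition G (m : nat) (z : R) := - z * sin z ^ (m+1) * cos z + sin z ^ (m+2) / INR (m+2).

Lemma G_der m z : is_derive (G m) z
  (INR (m+2) * (z * sin z ^ (m+2)) - INR (m+1) * (z * sin z ^ m)).
Proof.
  unfold G. auto_derive; auto.
  replace (m+1)%nat with (S m) by lia. replace (m+2)%nat with (S (S m)) by lia.
  simpl pred. rewrite !S_INR. simpl pow.
  assert (Hn : INR m + 1 + 1 <> 0) by (pose proof (pos_INR m); lra).
  pose proof (sin2_cos2 z) as H. unfold Rsqr in H.
  set (s := sin z) in *. set (c := cos z) in *. set (P := s ^ m) in *.
  apply Rminus_diag_uniq.
  transitivity (- z * (INR m + 1) * P * (s * s + c * c - 1)).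
  - field. auto.
  - rewrite H. ring.
Qed.

Lemma contR (f : R -> R) x : ex_derive f x -> continuous f x.
Proof. intro H. exact (ex_derive_continuous (K:=R_AbsRing) (V:=R_NormedModule) f x H). Qed.

Lemma ex_wp q : ex_RInt (fun z => z * sin z ^ q) 0 (PI/2).
Proof.
  apply (ex_RInt_continuous (V:=R_CompleteNormedModule)). intros x _.
  apply contR. auto_derive. auto.
Qed.

Lemma wp_rec m : INR (m+2) * wp (m+2) - INR (m+1) * wp m = / INR (m+2).
Proof.
  assert (H1 := is_RInt_derive (G m) _ 0 (PI/2) (fun x _ => G_der m x)).
  assert (H2 : is_RInt (fun x => INR (m+2) * (x * sin x ^ (m+2)) - INR (m+1) * (x * sin x ^ m)) 0 (PI/2)
     (INR (m+2) * wp (m+2) - INR (m+1) * wp m)).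
  { apply (is_RInt_minus (V:=R_NormedModule)); apply (is_RInt_scal (V:=R_NormedModule)); unfold wp; apply (RInt_correct (V:=R_CompleteNormedModule)), ex_wp. }
  assert (H3 : forall x : R, Rmin 0 (PI / 2) <= x <= Rmax 0 (PI / 2) -> continuous
     (fun x0 : R => INR (m + 2) * (x0 * sin x0 ^ (m + 2)) - INR (m + 1) * (x0 * sin x0 ^ m)) x).
  { intros x _. apply contR. auto_derive. auto. }
  rewrite <- (is_RInt_unique _ _ _ _ H2), (is_RInt_unique _ _ _ _ (H1 H3)).
  - unfold minus, plus, opp; simpl. unfold G. rewrite sin_PI2, cos_PI2, sin_0, !pow1, !pow_i by lia.
    field. apply not_0_INR; lia.
Qed.

Lemma wp_eval q F : (forall x, is_derive F x (x * sin x ^ q)) -> wp q = F (PI/2) - F 0.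
Proof.
  intro H. unfold wp. apply is_RInt_unique.
  apply (is_RInt_derive F (fun x => x * sin x ^ q)).
  - intros; apply H.
  - intros x _. apply contR. auto_derive. auto.
Qed.

Lemma wp0 : wp 0 = PI ^ 2 / 8.
Proof.
  rewrite (wp_eval 0 (fun x => x ^ 2 / 2)).
  - field.
  - intro x. auto_derive; auto. simpl; field.
Qed.

Lemma wp1 : wp 1 = 1.
Proof.
  rewrite (wp_eval 1 (fun x => - x * cos x + sin x)).
  - rewrite sin_PI2, cos_PI2, sin_0, cos_0. field.
  - intro x. auto_derive; auto. simpl; field.
Qed.

Lemma cbin_pos n : 0 < cbin n.
Proof.
  unfold cbin, Binomial.C. apply Rdiv_lt_0_compat.
  - apply INR_fact_lt_0.
  - apply Rmult_lt_0_compat; apply INR_fact_lt_0.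
Qed.

Lemma cbin_S n : cbin (S n) = cbin n * (2 * (2 * INR n + 1) / (INR n + 1)).
Proof.
  unfold cbin, Binomial.C.
  replace (2 * S n - S n)%nat with (S n) by lia.
  replace (2 * n - n)%nat with n by lia.
  replace (2 * S n)%nat with (S (S (2 * n))) by lia.
  rewrite !fact_simpl, !mult_INR, !S_INR, mult_INR. simpl (INR 2).
  assert (0 < INR (Factorial.fact n)) by apply INR_fact_lt_0.
  assert (0 < INR (Factorial.fact (2*n))) by apply INR_fact_lt_0.
  pose proof (pos_INR n).
  field. repeat split; lra.
Qed.

Lemma wp_rec' m : wp (m+2) = (INR (m+1) * wp m + / INR (m+2)) / INR (m+2).
Proof.
  pose proof (wp_rec m). assert (INR (m+2) <> 0) by (apply not_0_INR; lia).
  apply (Rmult_eq_reg_l (INR (m+2))); auto.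
  rewrite <- H. field. auto.
Qed.

Lemma sum_S (f : nat -> R) n : sum_n_m f 1 (S n) = sum_n_m f 1 n + f (S n).
Proof.
  destruct n.
  - rewrite sum_n_n, sum_n_m_zero by lia. unfold zero; simpl. ring.
  - rewrite sum_n_Sm by lia. reflexivity.
Qed.

Theorem lemma5p0p2 (n : nat) :
  wp (2 * n) =
    cbin n / 4 ^ (n + 1) *
    (PI ^ 2 / 2 +
     sum_n_m (fun k => 4 ^ k / (INR k ^ 2 * cbin k)) 1 n)
  /\
  wp (2 * n + 1) =
    4 ^ n / (INR (2 * n + 1) * cbin n) *
    (1 + sum_n_m (fun k => cbin k / (4 ^ k * INR (2 * k + 1))) 1 n).
Proof.
  induction n as [|n [IH1 IH2]].
  - simpl. rewrite !sum_n_m_zero by lia. unfold zero; simpl.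
    rewrite wp0, wp1. unfold cbin, Binomial.C. simpl. split; field.
  - pose proof (cbin_pos n). pose proof (pos_INR n).
    assert (0 < 4 ^ n) by (apply pow_lt; lra).
    rewrite !sum_S.
    replace (2 * S n)%nat with (2 * n + 2)%nat by lia.
    replace (2 * n + 2 + 1)%nat with (2 * n + 1 + 2)%nat by lia.
    rewrite !wp_rec', IH1, IH2.
    replace (S n + 1)%nat with (S (n + 1)) by lia.
    rewrite !cbin_S.
    replace (2 * S n + 1)%nat with (S (S (S (2 * n)))) by lia.
    replace (2 * n + 1 + 1)%nat with (S (S (2 * n))) by lia.
    replace (2 * n + 1 + 2)%nat with (S (S (S (2 * n)))) by lia.
    replace (2 * n + 2)%nat with (S (S (2 * n))) by lia.
    replace (2 * n + 1)%nat with (S (2 * n)) by lia.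
    replace (n + 1)%nat with (S n) by lia.
    rewrite !S_INR, !mult_INR. simpl pow. simpl (INR 2).
    set (A := sum_n_m _ 1 n). set (B := sum_n_m _ 1 n).
    split; field; repeat split; lra.
Qed.
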